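(* Let $M\in\mathbb R^{\mathbb N\times\mathbb N}$, let $\mathbb N=\bigcup_{\ell\in\mathbb N}B_\ell$ be a partition, $0<q<1$, $C>0$, $\varepsilon>0$ and $r\in\mathbb N$, such that: $|M_{ij}|\le Cq^{(1/2+\varepsilon)|\ell-k|}$ for all $i\in B_\ell$, $j\in B_k$; for all $i\in B_\ell$, $\#\{j\in B_k:M_{ij}\ne0\}\le Cq^{\min\{k,\ell\}-k}$; for all $j\in B_k$, $\#\{i\in B_\ell:M_{ij}\ne0\}\le Cq^{\min\{k,\ell\}-\ell}$; and $M_{ij}=0$ whenever $i\in B_\ell$, $j\in B_k$ with $|\ell-k|\le r$. Then \[\|M\|_2\le C_{\rm geo}q^{\varepsilon r},\] where $C_{\rm geo}>0$ depends only on $C$ and $q$.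
   Context: $\|\cdot\|_2$ is the operator norm on $\ell_2$. *)

(* Defs.v *)
From HB Require Import structures.
From mathcomp Require Import all_boot all_order all_algebra.
From mathcomp Require Import all_classical all_reals exp.
Set Implicit Arguments. Unset Strict Implicit. Unset Printing Implicit Defensive.
Import Order.TTheory GRing.Theory Num.Theory.
Local Open Scope ring_scope.

(* ||M||_2 <= K for the l2 operator norm: every finite section of M, acting on
   every finitely supported vector, has Euclidean operator norm at most K
   (the l2 operator norm of an infinite matrix is the sup of the operator
   norms of its finite sections; finitely supported vectors are dense). *)
Definition op_norm2_le (R : realType) (M : nat -> nat -> R) (K : R) : Prop :=
  forall (m n : nat) (x : nat -> R),
    \sum_(i < m) (\sum_(j < n) M i j * x j) ^+ 2
      <= K ^+ 2 * \sum_(j < n) x j ^+ 2.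

(* The partition N = U_l B_l is encoded by blk : nat -> nat, with
   B_l = [set i | blk i = l].  [nnz_row M blk k i] <= b  means
   #{ j in B_k : M i j <> 0 } <= b (the count being possibly infinite: we
   bound every finite initial portion). *)
Definition row_count_le (R : realType) (M : nat -> nat -> R) (blk : nat -> nat)
    (k i : nat) (b : R) : Prop :=
  forall n : nat, (#|[set j : 'I_n | (blk j == k) && (M i j != 0)]|%:R : R) <= b.

Definition col_count_le (R : realType) (M : nat -> nat -> R) (blk : nat -> nat)
    (l j : nat) (b : R) : Prop :=
  forall n : nat, (#|[set i : 'I_n | (blk i == l) && (M i j != 0)]|%:R : R) <= b.

(* Main.v *)
Require Import Defs.
From HB Require Import structures.
From mathcomp Require Import all_boot all_order all_algebra.
From mathcomp Require Import all_classical all_reals exp.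
From mathcomp Require Import ring lra zify.
Import Order.TTheory GRing.Theory Num.Theory.
Local Open Scope ring_scope.

Lemma wcs (R : realType) n (c y : nat -> R) : (forall j, 0 <= c j) ->
  (\sum_(j<n) c j * y j)^+2 <= (\sum_(j<n) c j) * (\sum_(j<n) c j * y j ^+ 2).
Proof.
move=> c0.
have D0 : 0 <= \sum_(j<n) \sum_(k<n) c j * c k * (y j - y k)^+2.
  apply: sumr_ge0 => j _; apply: sumr_ge0 => k _.
  by rewrite mulr_ge0 ?sqr_ge0 ?mulr_ge0.
have e1 : \sum_(j<n) \sum_(k<n) c j * c k * y j ^+ 2 =
   (\sum_(j<n) c j) * (\sum_(j<n) c j * y j ^+ 2).
  rewrite mulrC mulr_suml; apply: eq_bigr => j _; rewrite mulr_sumr.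
  by apply: eq_bigr => k _; ring.
have e2 : \sum_(j<n) \sum_(k<n) c j * c k * y k ^+ 2 =
   (\sum_(j<n) c j) * (\sum_(j<n) c j * y j ^+ 2).
  rewrite mulr_suml; apply: eq_bigr => j _; rewrite mulr_sumr.
  by apply: eq_bigr => k _; ring.
have e3 : \sum_(j<n) \sum_(k<n) c j * c k * (y j * y k) =
   (\sum_(j<n) c j * y j)^+2.
  rewrite expr2 mulr_suml; apply: eq_bigr => j _; rewrite mulr_sumr.
  by apply: eq_bigr => k _; ring.
have e : \sum_(j<n) \sum_(k<n) c j * c k * (y j - y k)^+2 =
  \sum_(j<n) \sum_(k<n) c j * c k * y j ^+ 2 + \sum_(j<n) \sum_(k<n) c j * c k * y k ^+ 2
  - 2 * \sum_(j<n) \sum_(k<n) c j * c k * (y j * y k).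
  rewrite mulr_sumr -big_split -sumrB; apply: eq_bigr => j _.
  rewrite mulr_sumr -big_split -sumrB; apply: eq_bigr => k _ /=; ring.
move: D0; rewrite e e1 e2 e3; lra.
Qed.

Lemma schur (R: realType) m n (M : nat -> nat -> R) (w : nat -> R) K1 K2 (x : nat -> R):
 (forall j, 0 < w j) -> 0 <= K1 ->
 (forall i, \sum_(j<n) `|M i j| * w j <= K1 * w i) ->
 (forall j, \sum_(i<m) `|M i j| * w i <= K2 * w j) ->
 \sum_(i<m) (\sum_(j<n) M i j * x j)^+2 <= K1 * K2 * \sum_(j<n) x j ^+2.
Proof.
move=> w0 K10 hr hc.
have s1 : forall i, (\sum_(j<n) M i j * x j)^+2 <=
   K1 * w i * \sum_(j<n) `|M i j| * x j ^+ 2 / w j.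
  move=> i.
  have h1 : `|\sum_(j<n) M i j * x j| <= \sum_(j<n) (`|M i j| * w j) * (`|x j| / w j).
    apply: le_trans (ler_norm_sum _ _ _) _.
    apply: ler_sum => j _; rewrite normrM.
    have := w0 j; move=> /lt0r_neq0 hw.
    by rewrite le_eqVlt; apply/orP; left; apply/eqP; field.
  have h2 := @wcs R n (fun j => `|M i j| * w j) (fun j => `|x j| / w j) (fun j => mulr_ge0 (normr_ge0 (M i j)) (ltW (w0 j))).
  have h3 : \sum_(j<n) `|M i j| * w j * (`|x j| / w j) ^+ 2 = \sum_(j<n) `|M i j| * x j ^+ 2 / w j.
    apply: eq_bigr => j _; have := w0 j; move=> /lt0r_neq0 hw.
    by rewrite -[x j ^+ 2](real_normK (num_real _)); field.
  rewrite h3 in h2.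
  have h4 : 0 <= \sum_(j<n) `|M i j| * x j ^+ 2 / w j.
    apply: sumr_ge0 => j _; apply: divr_ge0; [apply: mulr_ge0; [exact: normr_ge0 | exact: sqr_ge0] | exact: ltW].
  have h5 := hr i.
  have h6 : 0 <= \sum_(j<n) (`|M i j| * w j) * (`|x j| / w j).
    apply: le_trans h1; exact: normr_ge0.
  set a := \sum_(j<n) M i j * x j in h1 *.
  set b := \sum_(j<n) (`|M i j| * w j) * (`|x j| / w j) in h1 h2 h6.
  set s := \sum_(j<n) `|M i j| * w j in h2 h5.
  set t := \sum_(j<n) `|M i j| * x j ^+ 2 / w j in h2 h4 *.
  have ha : a ^+ 2 = `|a| ^+ 2 by rewrite (real_normK (num_real _)).
  have hna := normr_ge0 a.
  rewrite ha.
  have : `|a| ^+2 <= b ^+ 2.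
    by rewrite !expr2; apply: ler_pM.
  move=> hab; apply: le_trans hab _; apply: le_trans h2 _.
  by apply: ler_wpM2r.
apply: le_trans; first by apply: ler_sum => i _; exact: s1.
have e : \sum_(i<m) K1 * w i * \sum_(j<n) `|M i j| * x j ^+ 2 / w j =
   K1 * \sum_(j<n) (x j ^+ 2 / w j) * \sum_(i<m) `|M i j| * w i.
  transitivity (K1 * \sum_(i<m) \sum_(j<n) w i * (`|M i j| * x j ^+ 2 / w j)).
    rewrite mulr_sumr; apply: eq_bigr => i _; rewrite -mulrA; congr (K1 * _).
    by rewrite mulr_sumr.
  rewrite exchange_big /=; congr (K1 * _); apply: eq_bigr => j _.
  rewrite mulr_sumr; apply: eq_bigr => i _.
  have := lt0r_neq0 (w0 j) => hw; by field.
rewrite e -mulrA; apply: ler_wpM2l => //.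
rewrite mulr_sumr; apply: ler_sum => j _.
have hw := w0 j.
have : 0 <= x j ^+ 2 / w j by rewrite mulr_ge0 ?sqr_ge0 ?invr_ge0 ?ltW.
move=> hx; apply: le_trans (ler_wpM2l hx (hc j)) _.
rewrite le_eqVlt; apply/orP; left; apply/eqP; have := lt0r_neq0 hw => hw'; by field.
Qed.

Lemma geoA (R : realType) (p : R) (a b N : nat) : (a <= b)%N ->
  (1 - p) * \sum_(k < N) (if (b < k)%N then p ^+ (k - a) else 0)
   + p ^+ (maxn N b.+1 - a) = p ^+ (b.+1 - a).
Proof.
move=> hab; elim: N => [|N IH]; first by rewrite big_ord0 mulr0 add0r max0n.
rewrite big_ord_recr /=.
case: (ltnP b N) => h.
  have -> : maxn N.+1 b.+1 = N.+1 by lia.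
  have e : maxn N b.+1 = N by lia.
  rewrite e in IH.
  have -> : (N.+1 - a = (N - a).+1)%N by lia.
  rewrite exprS -IH; ring.
have -> : maxn N.+1 b.+1 = maxn N b.+1 by lia.
by rewrite addr0.
Qed.

Lemma geoB (R : realType) (p : R) (a r N : nat) :
  (1 - p) * \sum_(k < N) (if (k + r < a)%N then p ^+ (a - k) else 0)
   + p ^+ a.+1 = p ^+ (a.+1 - minn N (a - r)).
Proof.
elim: N => [|N IH]; first by rewrite big_ord0 mulr0 add0r min0n subn0.
rewrite big_ord_recr /=.
case: (ltnP (N + r) a) => h.
  have -> : minn N.+1 (a - r) = N.+1 by lia.
  have e : minn N (a - r) = N by lia.
  rewrite e in IH.
  have e2 : (a.+1 - N = (a - N).+1)%N by lia.
  have -> : (a.+1 - N.+1 = a - N)%N by lia.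
  rewrite e2 in IH.
  rewrite mulrDr addrAC IH exprS; ring.
have -> : minn N.+1 (a - r) = minn N (a - r) by lia.
by rewrite addr0.
Qed.

Lemma geo (R : realType) (p : R) (a r N : nat) : 0 <= p -> p < 1 ->
  \sum_(k < N) (if (r < `|a - k|)%N then p ^+ `|a - k| else 0)
    <= 2 * p ^+ r / (1 - p).
Proof.
move=> p0 p1.
have e : forall k : nat, (if (r < `|a - k|)%N then p ^+ `|a - k| else 0) =
   (if (a + r < k)%N then p ^+ (k - a) else 0) + (if (k + r < a)%N then p ^+ (a - k) else 0).
  move=> k; case: (leqP a k) => h.
    rewrite distnEr //.
    rewrite ltn_subRL.
    have -> : (k + r < a)%N = false.
      by apply/negbTE; rewrite -leqNgt; exact: leq_trans h (leq_addr r k).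
    exact: (esym (addr0 _)).
  rewrite distnEl; last exact: ltnW.
  rewrite ltn_subRL.
  have -> : (a + r < k)%N = false.
    by apply/negbTE; rewrite -leqNgt; exact: ltnW (leq_trans h (leq_addr r a)).
  rewrite addnC; exact: (esym (add0r _)).
under eq_bigr do rewrite e.
rewrite big_split /=.
have hA := @geoA R p a (a + r) N (leq_addr r a).
have hB := @geoB R p a r N.
have q0 : 0 < 1 - p by lra.
have pr : p ^+ r.+1 <= p ^+ r := ler_wiXn2l p0 (ltW p1) (leqnSn r).
have hA' : (1 - p) * \sum_(k < N) (if (a + r < k)%N then p ^+ (k - a) else 0) <= p ^+ r.
  have ee : ((a + r).+1 - a = r.+1)%N by lia.
  rewrite ee in hA.
  have := exprn_ge0 (maxn N (a + r).+1 - a) p0.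
  lra.
have hB' : (1 - p) * \sum_(k < N) (if (k + r < a)%N then p ^+ (a - k) else 0) <= p ^+ r.
  have ha := exprn_ge0 a.+1 p0.
  case: (ltnP r a) => hra.
    have : p ^+ (a.+1 - minn N (a - r)) <= p ^+ r.+1.
      apply: ler_wiXn2l => //; [exact: ltW | lia].
    lra.
  have e0 : (a - r = 0)%N by lia.
  rewrite e0 minn0 subn0 in hB.
  have : 0 <= p ^+ r := exprn_ge0 r p0.
  lra.
rewrite ler_pdivlMr // mulrDl.
lra.
Qed.

Lemma core (R : realType) (C q eps : R) (a b : nat) : 0 < q ->
 C * q `^ ((2^-1 + eps) * (`|a - b|%N)%:R) * q `^ (b%:R / 2) * (C * q ^- (b - minn b a))
  = C ^+ 2 * (q `^ eps) ^+ `|a - b| * q `^ (a%:R / 2).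
Proof.
move=> q0.
have qn : q != 0 by rewrite gt_eqF.
have D : forall x y, q `^ x * q `^ y = q `^ (x + y).
  by move=> x y; rewrite powRD // qn implybT.
rewrite -powR_invn ?ltW // -(powR_mulrn _ (powR_ge0 _ _)) -powRrM.
transitivity (C ^+ 2 * (q `^ ((2^-1 + eps) * (`|a - b|%N)%:R) * q `^ (b%:R / 2)
   * q `^ (- (b - minn b a)%N%:R))); first by ring.
rewrite -mulrA !D -[RHS]mulrA D; congr (_ * q `^ _).
case: (leqP a b) => h.
  by rewrite distnEr // natrB //; field.
rewrite distnEl; last exact: ltnW.
rewrite subnn natrB; last exact: ltnW.
by field.
Qed.

Lemma blocksum (R : realType) (C q eps : R) (M' : nat -> R) (bl : nat -> nat) (a r n : nat) :
  0 < q -> q < 1 -> 0 < C -> 0 < eps ->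
  (forall j, `|M' j| <= C * q `^ ((2^-1 + eps) * (`|a - bl j|%N)%:R)) ->
  (forall k m, (#|[set j : 'I_m | (bl j == k) && (M' j != 0)]|%:R : R) <= C * q ^- (k - minn k a)) ->
  (forall j, (`|a - bl j| <= r)%N -> M' j = 0) ->
  \sum_(j < n) `|M' j| * q `^ ((bl j)%:R / 2)
    <= C ^+ 2 * (2 * (q `^ eps) ^+ r / (1 - q `^ eps)) * q `^ (a%:R / 2).
Proof.
move=> q0 q1 C0 e0 hM hc hz.
set p := q `^ eps.
have p0 : 0 <= p := powR_ge0 _ _.
have p1 : p < 1.
  rewrite /p /powR gt_eqF // expR_lt1 pmulr_rlt0 //; apply: ln_lt0; by rewrite q0 q1.
set f := fun j : nat => `|M' j| * q `^ ((bl j)%:R / 2).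
set N := ((\max_(j < n) bl j)%N).+1.
have hN : forall j : 'I_n, (bl j < N)%N.
  by move=> j; rewrite /N ltnS; exact: (@leq_bigmax _ (fun j : 'I_n => bl j) j).
have step1 : \sum_(j < n) f j = \sum_(k < N) \sum_(j < n | k == bl j :> nat) f j.
  transitivity (\sum_(j < n) \sum_(k < N | k == bl j :> nat) f j).
    by apply: eq_bigr => j _; rewrite (big_ord1_eq _ (fun=> f j)) hN.
  under eq_bigr do rewrite big_mkcond.
  rewrite exchange_big; apply: eq_bigr => k _; by rewrite [RHS]big_mkcond.
rewrite step1.
set w := q `^ (a%:R / 2).
apply: (@le_trans _ _ (\sum_(k < N) C ^+ 2 * w * (if (r < `|a - k|)%N then p ^+ `|a - k| else 0))).
  apply: ler_sum => k _.
  case: ifP => hk.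
    rewrite (bigID (fun j : 'I_n => M' j != 0)) /=.
    have z : \sum_(j < n | (k == bl j :> nat) && ~~ (M' j != 0)) f j = 0.
      by apply: big1 => j /andP [_ /negPn /eqP hj]; rewrite /f hj normr0 mul0r.
    rewrite z addr0.
    set b := C * q `^ ((2^-1 + eps) * (`|a - k|%N)%:R) * q `^ (k%:R / 2).
    apply: (@le_trans _ _ (\sum_(j < n | (k == bl j :> nat) && (M' j != 0)) b)).
      apply: ler_sum => j /andP [/eqP hkj _].
      rewrite /f /b -hkj; apply: ler_wpM2r; first exact: powR_ge0.
      by have := hM j; rewrite -hkj.
    have card : \sum_(j < n | (k == bl j :> nat) && (M' j != 0)) b =
        b * (#|[set j : 'I_n | (bl j == k) && (M' j != 0)]|%:R).
      rewrite mulr_natr -sumr_const; apply: eq_bigl => j; by rewrite inE eq_sym.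
    rewrite card.
    have b0 : 0 <= b by rewrite /b !mulr_ge0 ?powR_ge0 ?ltW.
    apply: le_trans (ler_wpM2l b0 (hc k n)) _.
    rewrite /b core // -/p -/w.
    by rewrite mulrAC.
  rewrite mulr0 big1 // => j /eqP hkj; rewrite /f hz ?normr0 ?mul0r //.
  by rewrite -hkj leqNgt hk.
rewrite -mulr_sumr mulrAC; apply: ler_wpM2r; first exact: powR_ge0.
apply: ler_wpM2l; first exact: sqr_ge0.
exact: geo.
Qed.

Theorem lemma8p3 (R : realType) (C q eps : R) :
  0 < q -> q < 1 -> 0 < C -> 0 < eps ->
  exists Cgeo : R, 0 < Cgeo /\
  forall (M : nat -> nat -> R) (blk : nat -> nat) (r : nat),
    (forall i j, `|M i j| <= C * q `^ ((2^-1 + eps) * (`|blk i - blk j|%N)%:R)) ->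
    (forall i k, row_count_le M blk k i
                   (C * q ^- (k - minn k (blk i))%N)) ->
    (forall j l, col_count_le M blk l j
                   (C * q ^- (l - minn (blk j) l)%N)) ->
    (forall i j, (`|blk i - blk j| <= r)%N -> M i j = 0) ->
    op_norm2_le M (Cgeo * q `^ (eps * r%:R)).
Proof.
move=> q0 q1 C0 e0.
set p := q `^ eps.
have p0 : 0 <= p := powR_ge0 _ _.
have p1 : p < 1.
  rewrite /p /powR gt_eqF // expR_lt1 pmulr_rlt0 //; apply: ln_lt0; by rewrite q0 q1.
have hp : 0 < 1 - p by rewrite subr_gt0.
exists (2 * C ^+ 2 / (1 - p)); split.
  by rewrite divr_gt0 // mulr_gt0 // exprn_gt0.
move=> M blk r hM hrow hcol hz m n x.
have -> : q `^ (eps * r%:R) = p ^+ r by rewrite powRrM powR_mulrn // powR_ge0.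
set K := C ^+ 2 * (2 * p ^+ r / (1 - p)).
have eK : (2 * C ^+ 2 / (1 - p) * p ^+ r) ^+ 2 = K * K by rewrite /K; ring.
rewrite eK.
have K0 : 0 <= K by rewrite /K; apply: mulr_ge0; [exact: sqr_ge0 | apply: divr_ge0; [apply: mulr_ge0 => //; exact: exprn_ge0 | exact: ltW]].
apply: (@schur R m n M (fun j => q `^ ((blk j)%:R / 2)) K K x).
- by move=> j; exact: powR_gt0.
- exact: K0.
- move=> i; apply: (@blocksum R C q eps (M i) blk (blk i) r n q0 q1 C0 e0).
  + by move=> j; exact: hM.
  + by move=> k m'; exact: hrow.
  + by move=> j; exact: hz.
- move=> j; apply: (@blocksum R C q eps (fun i => M i j) blk (blk j) r m q0 q1 C0 e0).
  + by move=> i; rewrite distnC; exact: hM.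
  + by move=> k m'; rewrite minnC; exact: hcol.
  + by move=> i; rewrite distnC; exact: hz.
Qed.
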